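(* Let $\mathcal C$ be a hyper-extensive category with finite products and limits of $\omega^{\mathrm{op}}$-chains, in which finite products commute with countable coproducts. Let $\Sigma$ be an object, $\Sigma^n$ its $n$-fold power, $\Sigma^*=\coprod_{n<\omega}\Sigma^n$, and $\Sigma^\omega=\lim_{n<\omega}\Sigma^n$ (the limit of the chain $1\leftarrow\Sigma\leftarrow\Sigma\times\Sigma\leftarrow\cdots$ of projections). Then for the functor $HX=\Sigma\times X$ the free cia on an object $Y$ is $TY\cong\Sigma^*\times Y+\Sigma^\omega$; and for any object $W$ the functor $H'X=W+\Sigma\times X$ has free cias $T'Y\cong\Sigma^*\times(W+Y)+\Sigma^\omega$.
   Context: Hyper-extensive category: countable coproducts that are universal (pullbacks along arbitrary morphisms exist and preserve them), disjoint (injections monic, pairwise pullbacks initial), and coherent (a countable family of pairwise disjoint coproduct injections has copairing a coproduct injection). For an endofunctor $G$, an algebra $a\colon GA\to A$ is a cia if every $e\colon X\to GX+A$ admits a unique $s$ with $s=[a,\mathrm{id}_A]\cdot(Gs+\mathrm{id}_A)\cdot e$; a free cia on $Y$ is a cia with a morphism from $Y$ through which every morphism from $Y$ into a cia factors uniquely via an algebra morphism. *)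

(* Defs.v *)
Set Implicit Arguments.
Unset Strict Implicit.

Record Category : Type := {
  Ob :> Type;
  Hom : Ob -> Ob -> Type;
  idm : forall A, Hom A A;
  comp : forall A B C, Hom B C -> Hom A B -> Hom A C;
  comp_idl : forall A B (f : Hom A B), comp (idm B) f = f;
  comp_idr : forall A B (f : Hom A B), comp f (idm A) = f;
  comp_assoc : forall A B C D (f : Hom A B) (g : Hom B C) (h : Hom C D),
      comp h (comp g f) = comp (comp h g) f
}.
Arguments Hom {_} _ _.
Arguments idm {_} _.
Arguments comp {_ _ _ _} _ _.
Notation "g ∘ f" := (comp g f) (at level 40, left associativity).

Section Notions.
Variable C : Category.

Definition monic {A B : C} (m : Hom A B) : Prop :=
  forall Z (x y : Hom Z A), m ∘ x = m ∘ y -> x = y.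

Definition is_iso_obj (A B : C) : Prop :=
  exists (f : Hom A B) (g : Hom B A), g ∘ f = idm A /\ f ∘ g = idm B.

Definition is_initial (P : C) : Prop := forall Z : C, exists! h : Hom P Z, True.

(** countable index types: injectable into nat (includes finite ones) *)
Definition countable (I : Type) : Prop :=
  exists f : I -> nat, forall x y, f x = f y -> x = y.

Definition is_coproduct (I : Type) (A : I -> C) (S : C) (inj : forall i, Hom (A i) S) : Prop :=
  forall Z (f : forall i, Hom (A i) Z), exists! h : Hom S Z, forall i, h ∘ inj i = f i.

Definition is_bincoproduct (A B S : C) (i1 : Hom A S) (i2 : Hom B S) : Prop :=
  forall Z (f : Hom A Z) (g : Hom B Z), exists! h : Hom S Z, h ∘ i1 = f /\ h ∘ i2 = g.

Definition is_coproduct_injection {A S : C} (m : Hom A S) : Prop :=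
  exists (B : C) (n : Hom B S), is_bincoproduct m n.

Definition is_pullback {A B D : C} (f : Hom A D) (g : Hom B D)
  (P : C) (p : Hom P A) (q : Hom P B) : Prop :=
  f ∘ p = g ∘ q /\
  forall Z (x : Hom Z A) (y : Hom Z B), f ∘ x = g ∘ y ->
    exists! u : Hom Z P, p ∘ u = x /\ q ∘ u = y.

Definition has_countable_coproducts : Prop :=
  forall (I : Type), countable I -> forall A : I -> C,
    exists (S : C) (inj : forall i, Hom (A i) S), is_coproduct inj.

Definition coproducts_universal : Prop :=
  forall (I : Type), countable I -> forall (A : I -> C) (S : C) (inj : forall i, Hom (A i) S),
    is_coproduct inj ->
    forall (B : C) (f : Hom B S),
      (forall i, exists (P : C) (p : Hom P (A i)) (q : Hom P B), is_pullback (inj i) f p q) /\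
      (forall (P : I -> C) (p : forall i, Hom (P i) (A i)) (q : forall i, Hom (P i) B),
          (forall i, is_pullback (inj i) f (p i) (q i)) -> is_coproduct q).

Definition coproducts_disjoint : Prop :=
  forall (I : Type), countable I -> forall (A : I -> C) (S : C) (inj : forall i, Hom (A i) S),
    is_coproduct inj ->
    (forall i, monic (inj i)) /\
    (forall i j, i <> j -> forall (P : C) (p : Hom P (A i)) (q : Hom P (A j)),
        is_pullback (inj i) (inj j) p q -> is_initial P).

Definition coproducts_coherent : Prop :=
  forall (I : Type), countable I -> forall (A : I -> C) (S : C) (m : forall i, Hom (A i) S),
    (forall i, is_coproduct_injection (m i)) ->
    (forall i j, i <> j -> forall (P : C) (p : Hom P (A i)) (q : Hom P (A j)),
        is_pullback (m i) (m j) p q -> is_initial P) ->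
    forall (D : C) (inj : forall i, Hom (A i) D), is_coproduct inj ->
    forall u : Hom D S, (forall i, u ∘ inj i = m i) -> is_coproduct_injection u.

Definition hyper_extensive : Prop :=
  has_countable_coproducts /\ coproducts_universal /\ coproducts_disjoint /\ coproducts_coherent.

Record Terminal : Type := {
  t_obj : C;
  t_bang : forall Z : C, Hom Z t_obj;
  t_uniq : forall Z (h : Hom Z t_obj), h = t_bang Z
}.

Record BinProduct (X Y : C) : Type := {
  bp_obj : C;
  bp_p1 : Hom bp_obj X;
  bp_p2 : Hom bp_obj Y;
  bp_pair : forall Z : C, Hom Z X -> Hom Z Y -> Hom Z bp_obj;
  bp_beta1 : forall Z (f : Hom Z X) (g : Hom Z Y), bp_p1 ∘ bp_pair f g = f;
  bp_beta2 : forall Z (f : Hom Z X) (g : Hom Z Y), bp_p2 ∘ bp_pair f g = g;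
  bp_eta : forall Z (h : Hom Z bp_obj), h = bp_pair (bp_p1 ∘ h) (bp_p2 ∘ h)
}.

Record BinCoproduct (X Y : C) : Type := {
  bc_obj : C;
  bc_i1 : Hom X bc_obj;
  bc_i2 : Hom Y bc_obj;
  bc_copair : forall Z : C, Hom X Z -> Hom Y Z -> Hom bc_obj Z;
  bc_beta1 : forall Z (f : Hom X Z) (g : Hom Y Z), bc_copair f g ∘ bc_i1 = f;
  bc_beta2 : forall Z (f : Hom X Z) (g : Hom Y Z), bc_copair f g ∘ bc_i2 = g;
  bc_eta : forall Z (h : Hom bc_obj Z), h = bc_copair (h ∘ bc_i1) (h ∘ bc_i2)
}.

Variable bp : forall X Y : C, BinProduct X Y.
Variable bc : forall X Y : C, BinCoproduct X Y.

Definition prodO (X Y : C) : C := bp_obj (bp X Y).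
Definition prodM {X X' Y Y' : C} (f : Hom X X') (g : Hom Y Y') : Hom (prodO X Y) (prodO X' Y') :=
  bp_pair (bp X' Y') (f ∘ bp_p1 (bp X Y)) (g ∘ bp_p2 (bp X Y)).
Definition coprodO (X Y : C) : C := bc_obj (bc X Y).
Definition coprodM {X X' Y Y' : C} (f : Hom X X') (g : Hom Y Y') : Hom (coprodO X Y) (coprodO X' Y') :=
  bc_copair (bc X Y) (bc_i1 (bc X' Y') ∘ f) (bc_i2 (bc X' Y') ∘ g).
Definition copairM {X Y Z : C} (f : Hom X Z) (g : Hom Y Z) : Hom (coprodO X Y) Z :=
  bc_copair (bc X Y) f g.
Definition inlM {X Y : C} : Hom X (coprodO X Y) := bc_i1 (bc X Y).
Definition inrM {X Y : C} : Hom Y (coprodO X Y) := bc_i2 (bc X Y).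

Definition products_commute_with_coproducts : Prop :=
  forall (I : Type), countable I -> forall (A : I -> C) (S : C) (inj : forall i, Hom (A i) S),
    is_coproduct inj ->
    forall X : C, is_coproduct (fun i => prodM (idm X) (inj i)).

Definition is_chain_limit (D : nat -> C) (d : forall n, Hom (D (S n)) (D n))
  (L : C) (pi : forall n, Hom L (D n)) : Prop :=
  (forall n, d n ∘ pi (S n) = pi n) /\
  forall Z (x : forall n, Hom Z (D n)), (forall n, d n ∘ x (S n) = x n) ->
    exists! u : Hom Z L, forall n, pi n ∘ u = x n.

Definition has_chain_limits : Prop :=
  forall (D : nat -> C) (d : forall n, Hom (D (S n)) (D n)),
    exists (L : C) (pi : forall n, Hom L (D n)), is_chain_limit d pi.

Variable t : Terminal.
Variable Sg : C.

Fixpoint pow (n : nat) : C :=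
  match n with
  | O => t_obj t
  | S m => prodO Sg (pow m)
  end.

(** projection Σ^(n+1) -> Σ^n forgetting the last factor *)
Fixpoint powproj (n : nat) : Hom (pow (S n)) (pow n) :=
  match n return Hom (pow (S n)) (pow n) with
  | O => t_bang t (pow 1)
  | S m => prodM (idm Sg) (powproj m)
  end.

Section Cia.
Variable G0 : C -> C.
Variable G1 : forall X Y : C, Hom X Y -> Hom (G0 X) (G0 Y).

Definition is_cia (A : C) (a : Hom (G0 A) A) : Prop :=
  forall (X : C) (e : Hom X (coprodO (G0 X) A)),
    exists! s : Hom X A, s = copairM a (idm A) ∘ coprodM (G1 s) (idm A) ∘ e.

Definition is_algebra_morphism (A : C) (a : Hom (G0 A) A) (B : C) (b : Hom (G0 B) B)
  (h : Hom A B) : Prop := h ∘ a = b ∘ G1 h.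

Definition is_free_cia (Y : C) (A : C) (a : Hom (G0 A) A) (eta : Hom Y A) : Prop :=
  is_cia a /\
  forall (B : C) (b : Hom (G0 B) B), is_cia b ->
    forall f : Hom Y B,
      exists! h : Hom A B, is_algebra_morphism a b h /\ h ∘ eta = f.
End Cia.

Definition H0 (X : C) : C := prodO Sg X.
Definition H1 (X Y : C) (f : Hom X Y) : Hom (H0 X) (H0 Y) := prodM (idm Sg) f.
Definition H'0 (W X : C) : C := coprodO W (prodO Sg X).
Definition H'1 (W X Y : C) (f : Hom X Y) : Hom (H'0 W X) (H'0 W Y) :=
  coprodM (idm W) (prodM (idm Sg) f).

End Notions.

(* Main.v *)
Require Import Defs.
From Stdlib Require Import ClassicalEpsilon.
From Stdlib Require ssreflect.

Module P0.
Set Implicit Arguments.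
Unset Strict Implicit.

Lemma cA {C : Category} {A B D E : C} (f : Hom A B) (g : Hom B D) (h : Hom D E) :
  h ∘ g ∘ f = h ∘ (g ∘ f).
Proof. symmetry; apply comp_assoc. Qed.

Section Basic.
Variable C : Category.
Variable bp : forall X Y : C, BinProduct X Y.
Variable bc : forall X Y : C, BinCoproduct X Y.

Definition p1 {X Y : C} : Hom (prodO bp X Y) X := bp_p1 (bp X Y).
Definition p2 {X Y : C} : Hom (prodO bp X Y) Y := bp_p2 (bp X Y).
Definition pr {X Y Z : C} (f : Hom Z X) (g : Hom Z Y) : Hom Z (prodO bp X Y) := bp_pair (bp X Y) f g.

Lemma p1_pr {X Y Z : C} (f : Hom Z X) (g : Hom Z Y) : p1 ∘ pr f g = f.
Proof. apply bp_beta1. Qed.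
Lemma p2_pr {X Y Z : C} (f : Hom Z X) (g : Hom Z Y) : p2 ∘ pr f g = g.
Proof. apply bp_beta2. Qed.
Lemma p1_pr' {X Y Z W : C} (f : Hom Z X) (g : Hom Z Y) (h : Hom W Z) : p1 ∘ (pr f g ∘ h) = f ∘ h.
Proof. rewrite comp_assoc, p1_pr; reflexivity. Qed.
Lemma p2_pr' {X Y Z W : C} (f : Hom Z X) (g : Hom Z Y) (h : Hom W Z) : p2 ∘ (pr f g ∘ h) = g ∘ h.
Proof. rewrite comp_assoc, p2_pr; reflexivity. Qed.
Lemma prod_ext {X Y Z : C} (h k : Hom Z (prodO bp X Y)) : p1 ∘ h = p1 ∘ k -> p2 ∘ h = p2 ∘ k -> h = k.
Proof. intros E1 E2. rewrite (bp_eta h), (bp_eta k). f_equal; assumption. Qed.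
Lemma pr_eta {X Y : C} : pr (X:=X) (Y:=Y) p1 p2 = idm _.
Proof. apply prod_ext; rewrite ?p1_pr, ?p2_pr, ?comp_idr; reflexivity. Qed.
Lemma pr_comp {X Y Z W : C} (f : Hom Z X) (g : Hom Z Y) (h : Hom W Z) : pr f g ∘ h = pr (f ∘ h) (g ∘ h).
Proof. apply prod_ext; rewrite ?p1_pr, ?p2_pr, ?p1_pr', ?p2_pr'; reflexivity. Qed.
Lemma prodM_pr {X X' Y Y' : C} (f : Hom X X') (g : Hom Y Y') : prodM bp f g = pr (f ∘ p1) (g ∘ p2).
Proof. reflexivity. Qed.
Lemma p1_prodM {X X' Y Y' : C} (f : Hom X X') (g : Hom Y Y') : p1 ∘ prodM bp f g = f ∘ p1.
Proof. apply p1_pr. Qed.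
Lemma p2_prodM {X X' Y Y' : C} (f : Hom X X') (g : Hom Y Y') : p2 ∘ prodM bp f g = g ∘ p2.
Proof. apply p2_pr. Qed.
Lemma p1_prodM' {X X' Y Y' W : C} (f : Hom X X') (g : Hom Y Y') (h : Hom W _) : p1 ∘ (prodM bp f g ∘ h) = f ∘ (p1 ∘ h).
Proof. rewrite comp_assoc, p1_prodM, cA; reflexivity. Qed.
Lemma p2_prodM' {X X' Y Y' W : C} (f : Hom X X') (g : Hom Y Y') (h : Hom W _) : p2 ∘ (prodM bp f g ∘ h) = g ∘ (p2 ∘ h).
Proof. rewrite comp_assoc, p2_prodM, cA; reflexivity. Qed.
Lemma prodM_id {X Y : C} : prodM bp (idm X) (idm Y) = idm _.
Proof. apply prod_ext; rewrite ?p1_prodM, ?p2_prodM, ?comp_idl, ?comp_idr; reflexivity. Qed.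
Lemma prodM_comp {X X' X'' Y Y' Y'' : C} (f : Hom X X') (g : Hom Y Y') (f' : Hom X' X'') (g' : Hom Y' Y'') :
  prodM bp f' g' ∘ prodM bp f g = prodM bp (f' ∘ f) (g' ∘ g).
Proof. apply prod_ext; rewrite ?p1_prodM', ?p2_prodM', ?p1_prodM, ?p2_prodM, ?cA; reflexivity. Qed.

Definition cp {X Y Z : C} (f : Hom X Z) (g : Hom Y Z) : Hom (coprodO bc X Y) Z := copairM bc f g.
Definition il {X Y : C} : Hom X (coprodO bc X Y) := inlM bc.
Definition ir {X Y : C} : Hom Y (coprodO bc X Y) := inrM bc.
Lemma cp_il {X Y Z : C} (f : Hom X Z) (g : Hom Y Z) : cp f g ∘ il = f.
Proof. apply bc_beta1. Qed.
Lemma cp_ir {X Y Z : C} (f : Hom X Z) (g : Hom Y Z) : cp f g ∘ ir = g.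
Proof. apply bc_beta2. Qed.
Lemma cp_il' {X Y Z W : C} (f : Hom X Z) (g : Hom Y Z) (h : Hom W X) : cp f g ∘ (il ∘ h) = f ∘ h.
Proof. rewrite comp_assoc, cp_il; reflexivity. Qed.
Lemma cp_ir' {X Y Z W : C} (f : Hom X Z) (g : Hom Y Z) (h : Hom W Y) : cp f g ∘ (ir ∘ h) = g ∘ h.
Proof. rewrite comp_assoc, cp_ir; reflexivity. Qed.
Lemma coprod_ext {X Y Z : C} (h k : Hom (coprodO bc X Y) Z) : h ∘ il = k ∘ il -> h ∘ ir = k ∘ ir -> h = k.
Proof. intros E1 E2. rewrite (bc_eta h), (bc_eta k). f_equal; assumption. Qed.
Lemma cp_comp {X Y Z W : C} (f : Hom X Z) (g : Hom Y Z) (h : Hom Z W) : h ∘ cp f g = cp (h ∘ f) (h ∘ g).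
Proof. apply coprod_ext; rewrite ?cA, ?cp_il, ?cp_ir; reflexivity. Qed.
Lemma coprodM_cp {X X' Y Y' : C} (f : Hom X X') (g : Hom Y Y') : coprodM bc f g = cp (il ∘ f) (ir ∘ g).
Proof. reflexivity. Qed.
Lemma coprodM_il {X X' Y Y' : C} (f : Hom X X') (g : Hom Y Y') : coprodM bc f g ∘ il = il ∘ f.
Proof. apply cp_il. Qed.
Lemma coprodM_ir {X X' Y Y' : C} (f : Hom X X') (g : Hom Y Y') : coprodM bc f g ∘ ir = ir ∘ g.
Proof. apply cp_ir. Qed.
Lemma coprodM_il' {X X' Y Y' W : C} (f : Hom X X') (g : Hom Y Y') (h : Hom W X) : coprodM bc f g ∘ (il ∘ h) = il ∘ (f ∘ h).
Proof. rewrite comp_assoc, coprodM_il, cA; reflexivity. Qed.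
Lemma coprodM_ir' {X X' Y Y' W : C} (f : Hom X X') (g : Hom Y Y') (h : Hom W Y) : coprodM bc f g ∘ (ir ∘ h) = ir ∘ (g ∘ h).
Proof. rewrite comp_assoc, coprodM_ir, cA; reflexivity. Qed.
Lemma coprodM_id {X Y : C} : coprodM bc (idm X) (idm Y) = idm _.
Proof. apply coprod_ext; rewrite ?coprodM_il, ?coprodM_ir, ?comp_idl, ?comp_idr; reflexivity. Qed.
Lemma coprodM_comp {X X' X'' Y Y' Y'' : C} (f : Hom X X') (g : Hom Y Y') (f' : Hom X' X'') (g' : Hom Y' Y'') :
  coprodM bc f' g' ∘ coprodM bc f g = coprodM bc (f' ∘ f) (g' ∘ g).
Proof. apply coprod_ext; rewrite ?cA, ?coprodM_il, ?coprodM_ir, ?coprodM_il', ?coprodM_ir', ?cA; reflexivity. Qed.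
Lemma cp_coprodM {X X' Y Y' Z : C} (f : Hom X X') (g : Hom Y Y') (f' : Hom X' Z) (g' : Hom Y' Z) :
  cp f' g' ∘ coprodM bc f g = cp (f' ∘ f) (g' ∘ g).
Proof. apply coprod_ext; rewrite ?cA, ?coprodM_il, ?coprodM_ir, ?cp_il', ?cp_ir', ?cp_il, ?cp_ir; reflexivity. Qed.
Lemma cp_eta {X Y : C} : cp (X:=X) (Y:=Y) il ir = idm _.
Proof. apply coprod_ext; rewrite ?cp_il, ?cp_ir, ?comp_idl; reflexivity. Qed.
Lemma bc_bin {X Y : C} : is_bincoproduct (il (X:=X) (Y:=Y)) ir.
Proof. intros Z f g. exists (cp f g). split. split; [apply cp_il|apply cp_ir].
  intros h [E1 E2]. apply coprod_ext; rewrite ?cp_il, ?cp_ir; auto. Qed.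
End Basic.

Global Hint Rewrite @comp_idl @comp_idr @cA @p1_pr @p2_pr @p1_pr' @p2_pr' @p1_prodM @p2_prodM @p1_prodM' @p2_prodM'
  @cp_il @cp_ir @cp_il' @cp_ir' @coprodM_il @coprodM_ir @coprodM_il' @coprodM_ir' : cat.
Ltac csimpl := autorewrite with cat.

End P0.

Module P1.
Import P0.
Set Implicit Arguments.
Unset Strict Implicit.

Notation cid := constructive_indefinite_description.

Section Coprod.
Variable C : Category.

Definition cpr {I : Type} {A : I -> C} {S : C} {inj : forall i, Hom (A i) S} (H : is_coproduct inj) {Z : C}
  (f : forall i, Hom (A i) Z) : Hom S Z := proj1_sig (cid _ (H Z f)).
Lemma cpr_beta {I : Type} {A : I -> C} {S : C} {inj : forall i, Hom (A i) S} (H : is_coproduct inj) {Z : C}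
  (f : forall i, Hom (A i) Z) (i : I) : cpr H f ∘ inj i = f i.
Proof. exact (proj1 (proj2_sig (cid _ (H Z f))) i). Qed.
Lemma cpr_ext {I : Type} {A : I -> C} {S : C} {inj : forall i, Hom (A i) S} (H : is_coproduct inj) {Z : C}
  (h k : Hom S Z) : (forall i, h ∘ inj i = k ∘ inj i) -> h = k.
Proof. intros E. destruct (H Z (fun i => k ∘ inj i)) as [u [_ U]].
  transitivity u; [symmetry|]; apply U; auto. Qed.

Definition init_map {P : C} (H : is_initial P) (Z : C) : Hom P Z := proj1_sig (cid _ (H Z)).
Lemma init_ext {P : C} (H : is_initial P) {Z : C} (h k : Hom P Z) : h = k.
Proof. destruct (H Z) as [u [_ U]]. transitivity u; [symmetry|]; apply U; auto. Qed.

Definition bfam (A B : C) (b : bool) : C := if b then A else B.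
Definition binj {A B S : C} (i1 : Hom A S) (i2 : Hom B S) (b : bool) : Hom (bfam A B b) S :=
  match b return Hom (bfam A B b) S with true => i1 | false => i2 end.

Lemma bin_coprod {A B S : C} (i1 : Hom A S) (i2 : Hom B S) : is_bincoproduct i1 i2 -> is_coproduct (binj i1 i2).
Proof. intros H Z f. destruct (H Z (f true) (f false)) as [h [[E1 E2] U]]. exists h. split.
  - intros [|]; assumption.
  - intros k Hk. apply U. split; [apply (Hk true)|apply (Hk false)]. Qed.

Lemma coprod_bin (A : bool -> C) S (inj : forall b, Hom (A b) S) : is_coproduct inj -> is_bincoproduct (inj true) (inj false).
Proof. intros H Z f g.
  destruct (H Z (fun b => match b return Hom (A b) Z with true => f | false => g end)) as [h [Hh U]].
  exists h. split. split; [apply (Hh true)|apply (Hh false)].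
  intros k [E1 E2]. apply U. intros [|]; assumption. Qed.

Lemma bin_swap {A B S : C} (i1 : Hom A S) (i2 : Hom B S) : is_bincoproduct i1 i2 -> is_bincoproduct i2 i1.
Proof. intros H Z f g. destruct (H Z g f) as [h [[E1 E2] U]]. exists h. split. split; auto.
  intros k [K1 K2]. apply U; auto. Qed.

Lemma bin_ext {A B S : C} (i1 : Hom A S) (i2 : Hom B S) (H : is_bincoproduct i1 i2) {Z} (h k : Hom S Z) :
  h ∘ i1 = k ∘ i1 -> h ∘ i2 = k ∘ i2 -> h = k.
Proof. intros E1 E2. destruct (H Z (k ∘ i1) (k ∘ i2)) as [u [_ U]].
  transitivity u; [symmetry|]; apply U; auto. Qed.

Definition bcp {A B S : C} {i1 : Hom A S} {i2 : Hom B S} (H : is_bincoproduct i1 i2) {Z} (f : Hom A Z) (g : Hom B Z)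
  : Hom S Z := proj1_sig (cid _ (H Z f g)).
Lemma bcp_1 {A B S : C} {i1 : Hom A S} {i2 : Hom B S} (H : is_bincoproduct i1 i2) {Z} (f : Hom A Z) (g : Hom B Z) :
  bcp H f g ∘ i1 = f.
Proof. exact (proj1 (proj1 (proj2_sig (cid _ (H Z f g))))). Qed.
Lemma bcp_2 {A B S : C} {i1 : Hom A S} {i2 : Hom B S} (H : is_bincoproduct i1 i2) {Z} (f : Hom A Z) (g : Hom B Z) :
  bcp H f g ∘ i2 = g.
Proof. exact (proj2 (proj1 (proj2_sig (cid _ (H Z f g))))). Qed.

Lemma countable_bool : countable bool.
Proof. exists (fun b : bool => if b then 0 else 1). intros [|] [|]; simpl; congruence. Qed.
Lemma countable_nat : countable nat.
Proof. exists (fun n => n). auto. Qed.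
Lemma countable_empty : countable Empty_set.
Proof. exists (fun e : Empty_set => match e with end). intros []. Qed.

Lemma choice_pb {I : Type} (A : I -> C) (B : C) (R : forall i (P : C), Hom P (A i) -> Hom P B -> Prop) :
  (forall i, exists (P : C) (p : Hom P (A i)) (q : Hom P B), R i P p q) ->
  exists (P : I -> C) (p : forall i, Hom (P i) (A i)) (q : forall i, Hom (P i) B), forall i, R i (P i) (p i) (q i).
Proof. intros H.
  set (k1 := fun i => cid _ (H i)).
  set (k2 := fun i => cid _ (proj2_sig (k1 i))).
  set (k3 := fun i => cid _ (proj2_sig (k2 i))).
  exists (fun i => proj1_sig (k1 i)), (fun i => proj1_sig (k2 i)), (fun i => proj1_sig (k3 i)).
  intro i. exact (proj2_sig (k3 i)). Qed.

End Coprod.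

Section HypExt.
Variable C : Category.
Variable bp : forall X Y : C, BinProduct X Y.
Variable bc : forall X Y : C, BinCoproduct X Y.
Unset Implicit Arguments.
Variable HCC : has_countable_coproducts C.
Variable HU : coproducts_universal C.
Variable HD : coproducts_disjoint C.
Variable Hcomm : products_commute_with_coproducts bp.
Set Implicit Arguments.

Definition efam : Empty_set -> C := fun e => match e with end.

Lemma empty_initial {S : C} (inj : forall i, Hom (efam i) S) : is_coproduct inj -> is_initial S.
Proof. intros H Z. destruct (H Z (fun e => match e with end)) as [h [_ U]]. exists h. split. exact Logic.I.
  intros k _. apply U. intros []. Qed.

Lemma strict_init {Z P : C} (f : Hom Z P) : is_initial P -> is_initial Z.
Proof. intros HP.
  destruct (HCC _ countable_empty efam) as [S0 [inj0 H0]].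
  pose proof (Hcomm _ countable_empty _ _ _ H0 Z) as HQ.
  assert (QI : is_initial (prodO bp Z S0)).
  { intros W. destruct (HQ W (fun e => match e with end)) as [h [_ U]]. exists h. split. exact Logic.I.
    intros k _. apply U. intros []. }
  set (s := pr bp (idm Z) (init_map HP S0 ∘ f)).
  intros W. exists (init_map QI W ∘ s). split. exact Logic.I.
  intros k _. symmetry. transitivity (k ∘ p1 bp ∘ s).
  - rewrite cA. unfold s. rewrite p1_pr. rewrite comp_idr. reflexivity.
  - rewrite (init_ext QI (k ∘ p1 bp) (init_map QI W)). reflexivity. Qed.

Lemma disj_cone {I : Type} (cI : countable I) (A : I -> C) (S : C) (inj : forall i, Hom (A i) S) :
  is_coproduct inj -> forall i j, i <> j -> forall W (a : Hom W (A i)) (b : Hom W (A j)),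
  inj i ∘ a = inj j ∘ b -> is_initial W.
Proof. intros H i j ij W a b E.
  destruct (HU _ cI _ _ _ H _ (inj j)) as [H1 _]. destruct (H1 i) as [P [p [q Hpb]]].
  destruct (HD _ cI _ _ _ H) as [_ H2]. pose proof (H2 i j ij P p q Hpb) as HPi.
  destruct Hpb as [_ Hpb]. destruct (Hpb W a b E) as [u _].
  exact (strict_init u HPi). Qed.

Lemma disj_bin {A B S : C} (i1 : Hom A S) (i2 : Hom B S) : is_bincoproduct i1 i2 ->
  forall W (a : Hom W A) (b : Hom W B), i1 ∘ a = i2 ∘ b -> is_initial W.
Proof. intros H W a b E.
  exact (@disj_cone bool countable_bool (bfam A B) S (binj i1 i2) (bin_coprod H) true false ltac:(discriminate) W a b E).
Qed.

Lemma inj_monic {I : Type} (cI : countable I) (A : I -> C) (S : C) (inj : forall i, Hom (A i) S) :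
  is_coproduct inj -> forall i, monic (inj i).
Proof. intros H. exact (proj1 (HD _ cI _ _ _ H)). Qed.

Lemma bin_monic1 {A B S : C} (i1 : Hom A S) (i2 : Hom B S) : is_bincoproduct i1 i2 -> monic i1.
Proof. intros H. exact (@inj_monic bool countable_bool (bfam A B) S (binj i1 i2) (bin_coprod H) true). Qed.
Lemma bin_monic2 {A B S : C} (i1 : Hom A S) (i2 : Hom B S) : is_bincoproduct i1 i2 -> monic i2.
Proof. intros H. exact (@inj_monic bool countable_bool (bfam A B) S (binj i1 i2) (bin_coprod H) false). Qed.

Lemma decomp_all_initial {I : Type} (cI : countable I) (A : I -> C) (S : C) (inj : forall i, Hom (A i) S) :
  is_coproduct inj -> forall Z (h : Hom Z S),
  (forall i W (p : Hom W Z) (q : Hom W (A i)), h ∘ p = inj i ∘ q -> is_initial W) -> is_initial Z.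
Proof. intros H Z h Hi.
  destruct (HU _ cI _ _ _ H _ h) as [H1 H2].
  destruct (@choice_pb _ _ _ _ (fun i P (p : Hom P (A i)) (q : Hom P Z) => is_pullback (inj i) h p q) H1) as [P [p [q Hpb]]].
  pose proof (H2 P p q Hpb) as Hq.
  assert (PI : forall i, is_initial (P i)).
  { intro i. apply (Hi i (P i) (q i) (p i)). symmetry. apply (proj1 (Hpb i)). }
  intros W. exists (cpr Hq (fun i => init_map (PI i) W)). split. exact Logic.I.
  intros k _. apply (cpr_ext Hq). intro i. rewrite cpr_beta. apply (init_ext (PI i)). Qed.

Lemma decomp_bin {A B S : C} (i1 : Hom A S) (i2 : Hom B S) : is_bincoproduct i1 i2 ->
  forall Z (h : Hom Z S), (forall W (p : Hom W Z) (q : Hom W A), h ∘ p = i1 ∘ q -> is_initial W) ->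
  exists h' : Hom Z B, h = i2 ∘ h'.
Proof. intros H Z h Hi.
  destruct (HU _ countable_bool _ _ _ (bin_coprod H) _ h) as [H1 H2].
  destruct (@choice_pb _ _ _ _ (fun b P (p : Hom P (bfam A B b)) (q : Hom P Z) => is_pullback (binj i1 i2 b) h p q) H1)
    as [P [p [q Hpb]]].
  pose proof (coprod_bin (H2 P p q Hpb)) as Hq.
  assert (PI : is_initial (P true)).
  { apply (Hi (P true) (q true) (p true)). symmetry. apply (proj1 (Hpb true)). }
  set (r := bcp Hq (init_map PI (P false)) (idm _)).
  assert (E : q false ∘ r = idm _).
  { apply (bin_ext Hq).
    - rewrite cA. unfold r. rewrite bcp_1. rewrite comp_idl. apply (init_ext PI).
    - rewrite cA. unfold r. rewrite bcp_2. rewrite comp_idl, comp_idr. reflexivity. }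
  exists (p false ∘ r). rewrite comp_assoc. change i2 with (binj i1 i2 false).
  rewrite (proj1 (Hpb false)). rewrite cA, E, comp_idr. reflexivity. Qed.

Lemma pb_inj {A B S : C} (m : Hom A S) (n : Hom B S) : is_bincoproduct m n ->
  forall Z (f : Hom Z S), exists P (p : Hom P A) (q : Hom P Z), is_pullback m f p q /\ is_coproduct_injection q.
Proof. intros H Z f.
  destruct (HU _ countable_bool _ _ _ (bin_coprod H) _ f) as [H1 H2].
  destruct (@choice_pb _ _ _ _ (fun b P (p : Hom P (bfam A B b)) (q : Hom P Z) => is_pullback (binj m n b) f p q) H1)
    as [P [p [q Hpb]]].
  pose proof (coprod_bin (H2 P p q Hpb)) as Hq.
  exists (P true), (p true), (q true). split. exact (Hpb true). exists (P false), (q false). exact Hq. Qed.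

Lemma prod_bin (X : C) {A B S : C} (m : Hom A S) (n : Hom B S) : is_bincoproduct m n ->
  is_bincoproduct (prodM bp (idm X) m) (prodM bp (idm X) n).
Proof. intros H. exact (coprod_bin (Hcomm _ countable_bool _ _ _ (bin_coprod H) X)). Qed.

Lemma comp_inj {A B S D U : C} (a : Hom A S) (b : Hom B S) (j : Hom S U) (k : Hom D U) :
  is_bincoproduct a b -> is_bincoproduct j k -> is_coproduct_injection (j ∘ a).
Proof. intros Hab Hjk. exists (coprodO bc B D), (cp bc (j ∘ b) k).
  intros Z f g. exists (bcp Hjk (bcp Hab f (g ∘ il bc)) (g ∘ ir bc)). split. split.
  - rewrite comp_assoc, bcp_1, bcp_1. reflexivity.
  - apply coprod_ext; rewrite cA; rewrite ?cp_il, ?cp_ir; [rewrite comp_assoc, bcp_1, bcp_2|rewrite bcp_2]; reflexivity.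
  - intros h [E1 E2]. symmetry. apply (bin_ext Hjk).
    + rewrite bcp_1. apply (bin_ext Hab).
      * rewrite bcp_1, cA. exact E1.
      * rewrite bcp_2, <- E2. repeat rewrite cA. rewrite cp_il. reflexivity.
    + rewrite bcp_2, <- E2. repeat rewrite cA. rewrite cp_ir. reflexivity. Qed.

End HypExt.

End P1.

Module P2.
Import P0 P1.
Set Implicit Arguments.
Unset Strict Implicit.

Section Coalg.
Variable C : Category.
Variable bp : forall X Y : C, BinProduct X Y.
Variable bc : forall X Y : C, BinCoproduct X Y.
Variable Sg : C.

Local Notation F0 Y X := (coprodO bc (prodO bp Sg X) Y).
Definition F1 (Y : C) {X X' : C} (f : Hom X X') : Hom (F0 Y X) (F0 Y X') :=
  coprodM bc (prodM bp (idm Sg) f) (idm Y).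

Definition is_final (Y T : C) (tau : Hom T (F0 Y T)) : Prop :=
  forall X (c : Hom X (F0 Y X)), exists! u : Hom X T, tau ∘ u = F1 Y u ∘ c.

Lemma F1_comp (Y : C) {X X' X'' : C} (f : Hom X X') (g : Hom X' X'') : F1 Y (g ∘ f) = F1 Y g ∘ F1 Y f.
Proof. unfold F1. rewrite coprodM_comp, prodM_comp, !comp_idl. reflexivity. Qed.
Lemma F1_id (Y X : C) : F1 Y (idm X) = idm _.
Proof. unfold F1. rewrite prodM_id, coprodM_id. reflexivity. Qed.
Lemma F1_il (Y : C) {X X' : C} (f : Hom X X') : F1 Y f ∘ il bc = il bc ∘ prodM bp (idm Sg) f.
Proof. apply coprodM_il. Qed.
Lemma F1_il' (Y : C) {X X' W : C} (f : Hom X X') (h : Hom W _) : F1 Y f ∘ (il bc ∘ h) = il bc ∘ (prodM bp (idm Sg) f ∘ h).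
Proof. rewrite comp_assoc, F1_il, cA. reflexivity. Qed.
Lemma F1_ir (Y : C) {X X' : C} (f : Hom X X') : F1 Y f ∘ ir bc = ir bc.
Proof. unfold F1. rewrite coprodM_ir, comp_idr. reflexivity. Qed.

Section Fin.
Variables (Y T : C) (tau : Hom T (F0 Y T)) (HF : is_final tau).

Lemma final_uniq {X} (c : Hom X (F0 Y X)) (u v : Hom X T) :
  tau ∘ u = F1 Y u ∘ c -> tau ∘ v = F1 Y v ∘ c -> u = v.
Proof. intros Eu Ev. destruct (HF c) as [w [_ U]]. transitivity w; [symmetry|]; apply U; auto. Qed.

Lemma lambek : exists l : Hom (F0 Y T) T, l ∘ tau = idm T /\ tau ∘ l = idm _.
Proof. destruct (HF (F1 Y tau)) as [l [El _]]. exists l.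
  assert (E : l ∘ tau = idm T).
  { apply (final_uniq (c := tau)).
    - rewrite comp_assoc, El, F1_comp, !cA. reflexivity.
    - rewrite comp_idr, F1_id, comp_idl. reflexivity. }
  split. exact E. rewrite El, <- F1_comp, E, F1_id. reflexivity. Qed.

Variables (l : Hom (F0 Y T) T) (Hl1 : l ∘ tau = idm T) (Hl2 : tau ∘ l = idm _).

Definition alg : Hom (prodO bp Sg T) T := l ∘ il bc.
Definition eta : Hom Y T := l ∘ ir bc.

Lemma tau_alg : tau ∘ alg = il bc.
Proof. unfold alg. rewrite comp_assoc, Hl2, comp_idl. reflexivity. Qed.

Lemma final_cia : is_cia bc (H1 bp Sg) alg.
Proof. intros X e. unfold H1, H0 in *.
  set (c' := cp bc (cp bc (il bc ∘ prodM bp (idm Sg) (il bc)) (F1 Y (ir bc) ∘ tau) ∘ e) (F1 Y (ir bc) ∘ tau)).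
  destruct (HF c') as [u [Eu Uu]].
  assert (Hur : u ∘ ir bc = idm T).
  { apply (final_uniq (c := tau)).
    - rewrite comp_assoc, Eu. unfold c'. rewrite cA, cp_ir, comp_assoc, <- F1_comp. reflexivity.
    - rewrite comp_idr, F1_id, comp_idl. reflexivity. }
  exists (u ∘ il bc). split.
  - assert (K : l ∘ F1 Y u ∘ cp bc (il bc ∘ prodM bp (idm Sg) (il bc)) (F1 Y (ir bc) ∘ tau)
                = cp bc (alg ∘ prodM bp (idm Sg) (u ∘ il bc)) (idm T)).
    { apply coprod_ext.
      - rewrite !cA, !cp_il, F1_il'. rewrite prodM_comp, comp_idl. unfold alg. rewrite cA. reflexivity.
      - rewrite !cA, cp_ir, cp_ir. rewrite (comp_assoc tau (F1 Y (ir bc)) (F1 Y u)), <- F1_comp, Hur, F1_id, comp_idl.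
        exact Hl1. }
    assert (RHS : copairM bc alg (idm T) ∘ coprodM bc (prodM bp (idm Sg) (u ∘ il bc)) (idm T)
                  = cp bc (alg ∘ prodM bp (idm Sg) (u ∘ il bc)) (idm T)).
    { change (copairM bc alg (idm T)) with (cp bc alg (idm T)). rewrite cp_coprodM, comp_idl. reflexivity. }
    rewrite RHS, <- K.
    transitivity (l ∘ (tau ∘ (u ∘ il bc))). { rewrite comp_assoc, Hl1, comp_idl. reflexivity. }
    rewrite (comp_assoc (il bc) u tau), Eu. unfold c'. rewrite cA, cp_il. rewrite !cA. reflexivity.
  - intros s' Es'.
    assert (RHS : copairM bc alg (idm T) ∘ coprodM bc (prodM bp (idm Sg) s') (idm T)
                  = cp bc (alg ∘ prodM bp (idm Sg) s') (idm T)).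
    { change (copairM bc alg (idm T)) with (cp bc alg (idm T)). rewrite cp_coprodM, comp_idl. reflexivity. }
    rewrite RHS in Es'.
    assert (K : tau ∘ cp bc (alg ∘ prodM bp (idm Sg) s') (idm T)
              = F1 Y (cp bc s' (idm T)) ∘ cp bc (il bc ∘ prodM bp (idm Sg) (il bc)) (F1 Y (ir bc) ∘ tau)).
    { apply coprod_ext.
      - unfold alg. rewrite !cA, !cp_il. rewrite (comp_assoc _ l tau), Hl2, comp_idl.
        rewrite F1_il', prodM_comp, comp_idl, cp_il. reflexivity.
      - rewrite !cA, !cp_ir, comp_idr. rewrite (comp_assoc tau (F1 Y (ir bc))), <- F1_comp, cp_ir, F1_id, comp_idl.
        reflexivity. }
    assert (Hcoal : tau ∘ cp bc s' (idm T) = F1 Y (cp bc s' (idm T)) ∘ c').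
    { unfold c'. apply coprod_ext.
      - rewrite !cA, !cp_il. rewrite Es' at 1. rewrite comp_assoc, K, cA. reflexivity.
      - rewrite !cA, !cp_ir, comp_idr. rewrite (comp_assoc tau (F1 Y (ir bc))), <- F1_comp, cp_ir, F1_id, comp_idl.
        reflexivity. }
    pose proof (Uu _ Hcoal) as E. rewrite E, cp_il. reflexivity. Qed.

Lemma alg_char {B : C} (b : Hom (prodO bp Sg B) B) (f : Hom Y B) (h : Hom T B) :
  h = cp bc (b ∘ prodM bp (idm Sg) h) f ∘ tau <-> (h ∘ alg = b ∘ prodM bp (idm Sg) h /\ h ∘ eta = f).
Proof. split.
  - intros E. split.
    + rewrite E at 1. unfold alg. rewrite !cA, (comp_assoc _ l tau), Hl2, comp_idl, cp_il. reflexivity.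
    + rewrite E at 1. unfold eta. rewrite !cA, (comp_assoc _ l tau), Hl2, comp_idl, cp_ir. reflexivity.
  - intros [E1 E2]. transitivity (h ∘ l ∘ tau). rewrite cA, Hl1, comp_idr. reflexivity.
    f_equal. apply coprod_ext; rewrite ?cp_il, ?cp_ir, cA; assumption. Qed.

Lemma final_free : is_free_cia bc (H1 bp Sg) alg eta.
Proof. split. exact final_cia.
  intros B b Hb f. unfold H1, H0 in *.
  destruct (Hb T (coprodM bc (idm _) f ∘ tau)) as [h [Eh U]].
  assert (Key : forall h' : Hom T B, (h' = copairM bc b (idm B) ∘ coprodM bc (prodM bp (idm Sg) h') (idm B) ∘ (coprodM bc (idm _) f ∘ tau))
     <-> h' = cp bc (b ∘ prodM bp (idm Sg) h') f ∘ tau).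
  { intros h'. change (copairM bc b (idm B)) with (cp bc b (idm B)).
    rewrite cp_coprodM, comp_idl, comp_assoc, cp_coprodM, comp_idr, comp_idl. tauto. }
  exists h. split.
  - unfold is_algebra_morphism. apply alg_char, Key, Eh.
  - intros h' [E1 E2]. apply U. apply Key. apply alg_char. split; assumption. Qed.

End Fin.
End Coalg.

End P2.

Module P3.
Import P0 P1 P2.
Set Implicit Arguments.
Unset Strict Implicit.

Section HP.
Variable C : Category.
Variable bp : forall X Y : C, BinProduct X Y.
Variable bc : forall X Y : C, BinCoproduct X Y.
Variables (Sg W Y T : C) (a : Hom (prodO bp Sg T) T) (eta : Hom (coprodO bc W Y) T).
Hypothesis Hfree : is_free_cia bc (H1 bp Sg) a eta.

Lemma cia_transfer {X : C} (e : Hom X (coprodO bc (coprodO bc W (prodO bp Sg X)) T)) :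
  forall s : Hom X T,
  copairM bc (cp bc (eta ∘ il bc) a) (idm T) ∘ coprodM bc (coprodM bc (idm W) (prodM bp (idm Sg) s)) (idm T) ∘ e
  = copairM bc a (idm T) ∘ coprodM bc (prodM bp (idm Sg) s) (idm T) ∘
      (cp bc (cp bc (ir bc ∘ (eta ∘ il bc)) (il bc)) (ir bc) ∘ e).
Proof. intros s. rewrite (comp_assoc e). f_equal.
  change (copairM bc (cp bc (eta ∘ il bc) a) (idm T)) with (cp bc (cp bc (eta ∘ il bc) a) (idm T)).
  change (copairM bc a (idm T)) with (cp bc a (idm T)).
  apply coprod_ext; [apply coprod_ext|]; csimpl; reflexivity. Qed.

Lemma H'_free : is_free_cia bc (H'1 bp bc Sg W) (cp bc (eta ∘ il bc) a) (eta ∘ ir bc).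
Proof. destruct Hfree as [Hcia Hf]. split.
  - intros X e. unfold H'1, H'0, H1, H0 in *.
    destruct (Hcia X (cp bc (cp bc (ir bc ∘ (eta ∘ il bc)) (il bc)) (ir bc) ∘ e)) as [s [Es U]].
    exists s. split.
    + rewrite cia_transfer. exact Es.
    + intros s' Es'. apply U. rewrite <- cia_transfer. exact Es'.
  - intros B b' Hb' f. unfold H'1, H'0, H1, H0 in *.
    set (b := b' ∘ ir bc). set (bw := b' ∘ il bc).
    assert (Hb : is_cia bc (H1 bp Sg) b).
    { intros X e. unfold H1, H0 in *.
      assert (Tr : forall s : Hom X B,
        copairM bc b' (idm B) ∘ coprodM bc (coprodM bc (idm W) (prodM bp (idm Sg) s)) (idm B) ∘ (coprodM bc (ir bc) (idm B) ∘ e)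
        = copairM bc b (idm B) ∘ coprodM bc (prodM bp (idm Sg) s) (idm B) ∘ e).
      { intros s. rewrite (comp_assoc e). f_equal.
        change (copairM bc b' (idm B)) with (cp bc b' (idm B)).
        change (copairM bc b (idm B)) with (cp bc b (idm B)).
        unfold b. apply coprod_ext; csimpl; reflexivity. }
      destruct (Hb' X (coprodM bc (ir bc) (idm B) ∘ e)) as [s [Es U]].
      exists s. split.
      + rewrite <- Tr. exact Es.
      + intros s' Es'. apply U. rewrite Tr. exact Es'. }
    destruct (Hf B b Hb (cp bc bw f)) as [h [[Eh1 Eh2] U]].
    unfold is_algebra_morphism, H1, H'1 in *.
    exists h. split.
    + split.
      * unfold b in Eh1. apply coprod_ext; csimpl.
        -- rewrite comp_assoc, Eh2. csimpl. reflexivity.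
        -- rewrite Eh1. csimpl. reflexivity.
      * rewrite comp_assoc, Eh2. csimpl. reflexivity.
    + intros h' [E1 E2]. apply U. split.
      * unfold b. transitivity (h' ∘ cp bc (eta ∘ il bc) a ∘ ir bc). csimpl. reflexivity.
        rewrite E1. csimpl. reflexivity.
      * apply coprod_ext.
        -- csimpl. unfold bw. transitivity (h' ∘ cp bc (eta ∘ il bc) a ∘ il bc).
           csimpl. reflexivity. rewrite E1. csimpl. reflexivity.
        -- csimpl. exact E2. Qed.
End HP.

End P3.

Module P4.
Import P0 P1 P2 P3.
Import ssreflect.
Unset Implicit Arguments.

Ltac ssimpl := repeat progress (rewrite ?cA ?comp_idl ?comp_idr ?p1_pr ?p2_pr ?p1_pr' ?p2_pr' ?p1_prodM ?p2_prodM
  ?p1_prodM' ?p2_prodM' ?cp_il ?cp_ir ?cp_il' ?cp_ir' ?coprodM_il ?coprodM_ir ?coprodM_il' ?coprodM_ir').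
Unset Strict Implicit.

Lemma prodM_comp' {C : Category} (bp : forall X Y : C, BinProduct X Y) {X X' X'' Y Y' Y'' W : C}
  (f : Hom X X') (g : Hom Y Y') (f' : Hom X' X'') (g' : Hom Y' Y'') (h : Hom W _) :
  prodM bp f' g' ∘ (prodM bp f g ∘ h) = prodM bp (f' ∘ f) (g' ∘ g) ∘ h.
Proof. rewrite comp_assoc prodM_comp. reflexivity. Qed.

Section Omega.
Variable C : Category.
Variable bp : forall X Y : C, BinProduct X Y.
Variable t : Terminal C.
Variable Sg : C.
Variables (Somega : C) (pi : forall n, Hom Somega (pow bp t Sg n)).
Hypothesis Homega : is_chain_limit (powproj bp t Sg) pi.

Local Notation pw n := (pow bp t Sg n).

Lemma term_eq {Z : C} (h k : Hom Z (t_obj t)) : h = k.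
Proof. rewrite (t_uniq h) (t_uniq k). reflexivity. Qed.

Definition lim {Z : C} (x : forall n, Hom Z (pw n)) (Hx : forall n, powproj bp t Sg n ∘ x (S n) = x n) : Hom Z Somega :=
  proj1_sig (constructive_indefinite_description _ (proj2 Homega Z x Hx)).
Lemma lim_beta {Z : C} (x : forall n, Hom Z (pw n)) Hx n : pi n ∘ lim x Hx = x n.
Proof. exact (proj1 (proj2_sig (constructive_indefinite_description _ (proj2 Homega Z x Hx))) n). Qed.
Lemma lim_ext {Z : C} (u v : Hom Z Somega) : (forall n, pi n ∘ u = pi n ∘ v) -> u = v.
Proof. intros E.
  assert (Hx : forall n, powproj bp t Sg n ∘ (pi (S n) ∘ v) = pi n ∘ v).
  { intro n. rewrite comp_assoc (proj1 Homega n). reflexivity. }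
  destruct (proj2 Homega Z _ Hx) as [w [_ U]]. transitivity w; [symmetry|]; apply U; auto. Qed.

Lemma p1_powproj (n : nat) : p1 bp ∘ powproj bp t Sg (S n) = p1 bp.
Proof. rewrite /= p1_prodM comp_idl. reflexivity. Qed.
Lemma p2_powproj (n : nat) : p2 bp ∘ powproj bp t Sg (S n) = powproj bp t Sg n ∘ p2 bp.
Proof. rewrite /= p2_prodM. reflexivity. Qed.

Lemma tail_ok : forall n, powproj bp t Sg n ∘ (p2 bp ∘ pi (S (S n))) = p2 bp ∘ pi (S n).
Proof. intro n. rewrite comp_assoc -p2_powproj cA (proj1 Homega (S n)). reflexivity. Qed.

Definition tailw : Hom Somega Somega := lim (fun n => p2 bp ∘ pi (S n)) tail_ok.
Definition osplit : Hom Somega (prodO bp Sg Somega) := pr bp (p1 bp ∘ pi 1) tailw.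

Lemma p1_pi (k : nat) : p1 bp ∘ pi (S k) = p1 bp ∘ pi 1.
Proof. induction k. reflexivity.
  rewrite -IHk -(proj1 Homega (S k)) comp_assoc p1_powproj. reflexivity. Qed.

Lemma pi_S (k : nat) : pi (S k) = prodM bp (idm Sg) (pi k) ∘ osplit.
Proof. apply prod_ext.
  - rewrite p1_prodM' comp_idl /osplit p1_pr. apply p1_pi.
  - rewrite p2_prodM' /osplit p2_pr /tailw lim_beta. reflexivity. Qed.

Definition ycons (k : nat) : Hom (prodO bp Sg Somega) (pw k) :=
  match k return Hom (prodO bp Sg Somega) (pw k) with
  | O => t_bang t _
  | S m => prodM bp (idm Sg) (pi m)
  end.
Lemma ycons_ok : forall n, powproj bp t Sg n ∘ ycons (S n) = ycons n.
Proof. intros [|n]. apply term_eq. simpl.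
  rewrite prodM_comp comp_idl (proj1 Homega n). reflexivity. Qed.
Definition ocons : Hom (prodO bp Sg Somega) Somega := lim ycons ycons_ok.

Lemma ocons_split : ocons ∘ osplit = idm _.
Proof. apply lim_ext. intros [|k]. apply term_eq.
  rewrite comp_assoc /ocons lim_beta comp_idr /=. symmetry. apply pi_S. Qed.

Lemma osplit_char {Z : C} (g : Hom Z Somega) (d : Hom Z (prodO bp Sg Z)) (x : forall n, Hom Z (pw n)) :
  x 0 = t_bang t _ -> (forall k, x (S k) = prodM bp (idm Sg) (x k) ∘ d) ->
  osplit ∘ g = prodM bp (idm Sg) g ∘ d -> forall k, pi k ∘ g = x k.
Proof. intros H0 HS E k. induction k. apply term_eq.
  rewrite pi_S cA E comp_assoc prodM_comp comp_idl IHk HS. reflexivity. Qed.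

Lemma osplit_lim {Z : C} (d : Hom Z (prodO bp Sg Z)) (x : forall n, Hom Z (pw n)) Hx :
  x 0 = t_bang t _ -> (forall k, x (S k) = prodM bp (idm Sg) (x k) ∘ d) ->
  osplit ∘ lim x Hx = prodM bp (idm Sg) (lim x Hx) ∘ d.
Proof. intros H0 HS. apply prod_ext.
  - rewrite /osplit. ssimpl. rewrite (lim_beta x Hx 1) HS. ssimpl. reflexivity.
  - rewrite /osplit. ssimpl. apply lim_ext. intro k.
    rewrite [pi k ∘ (tailw ∘ _)]comp_assoc /tailw (lim_beta _ tail_ok k) cA (lim_beta x Hx (S k)) HS.
    rewrite [pi k ∘ (lim x Hx ∘ _)]comp_assoc (lim_beta x Hx k). ssimpl. reflexivity. Qed.

End Omega.

End P4.

Module P5.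
Import P0 P1 P2 P3 P4.
Import ssreflect.
Unset Implicit Arguments.


Section Core.
Variables (C : Category) (bp : forall X Y : C, BinProduct X Y) (bc : forall X Y : C, BinCoproduct X Y) (t : Terminal C).
Variables (HCC : has_countable_coproducts C) (HU : coproducts_universal C) (HD : coproducts_disjoint C)
  (HCo : coproducts_coherent C) (Hcomm : products_commute_with_coproducts bp).
Variables (Sg Sstar : C) (ins : forall n, Hom (pow bp t Sg n) Sstar) (Hstar : is_coproduct ins).
Variables (Somega : C) (pi : forall n, Hom Somega (pow bp t Sg n)) (Homega : is_chain_limit (powproj bp t Sg) pi).
Variable Y : C.

Local Notation pw n := (pow bp t Sg n).
Local Notation P := (prodO bp Y Sstar).
Local Notation T := (coprodO bc P Somega).
Local Notation FT := (coprodO bc (prodO bp Sg T) Y).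
Local Notation il := (il bc).
Local Notation ir := (ir bc).
Local Notation p1 := (p1 bp).
Local Notation p2 := (p2 bp).
Local Notation pr := (pr bp).
Local Notation cp := (cp bc).

Definition jn (n : nat) : Hom (prodO bp Y (pw n)) P := prodM bp (idm Y) (ins n).
Definition HP : is_coproduct jn := Hcomm nat countable_nat _ _ ins Hstar Y.
Definition HSP : is_coproduct (fun n => prodM bp (idm Sg) (jn n)) := Hcomm nat countable_nat _ _ jn HP Sg.
Definition HST : is_bincoproduct (prodM bp (idm Sg) (@P0.il C bc P Somega)) (prodM bp (idm Sg) ir) :=
  @prod_bin C bp Hcomm Sg _ _ _ il ir (bc_bin bc).

Local Notation om := (osplit C bp t Sg Somega pi Homega).
Local Notation oc := (ocons C bp t Sg Somega pi Homega).

Definition reassoc (n : nat) : Hom (prodO bp Sg (prodO bp Y (pw n))) (prodO bp Y (pw (S n))) :=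
  @P0.pr C bp Y (prodO bp Sg (pw n)) _ (p1 ∘ p2) (@P0.pr C bp Sg (pw n) _ p1 (p2 ∘ p2)).

Definition tauf (n : nat) : Hom (prodO bp Y (pw n)) FT :=
  match n return Hom (prodO bp Y (pw n)) FT with
  | O => ir ∘ p1
  | S m => il ∘ @P0.pr C bp Sg T _ (p1 ∘ @P0.p2 C bp Y (prodO bp Sg (pw m)))
                 (il ∘ jn m ∘ @P0.pr C bp Y (pw m) _ p1 (p2 ∘ @P0.p2 C bp Y (prodO bp Sg (pw m))))
  end.

Definition tau : Hom T FT := cp (cpr HP tauf) (il ∘ prodM bp (idm Sg) ir ∘ om).

Definition aP : Hom (prodO bp Sg P) T := cpr HSP (fun n => il ∘ jn (S n) ∘ reassoc n).
Definition aS : Hom (prodO bp Sg T) T := bcp HST aP (ir ∘ oc).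
Definition nu : Hom FT T := cp aS (il ∘ jn 0 ∘ pr (idm Y) (t_bang t Y)).

Lemma prodM_idc {A B D : C} (f : Hom B D) (g : Hom A B) :
  prodM bp (idm Sg) (f ∘ g) = prodM bp (idm Sg) f ∘ prodM bp (idm Sg) g.
Proof. rewrite prodM_comp comp_idl. reflexivity. Qed.

Lemma aS_jn (n : nat) : aS ∘ prodM bp (idm Sg) (il ∘ jn n) = il ∘ jn (S n) ∘ reassoc n.
Proof. rewrite prodM_idc comp_assoc /aS bcp_1 /aP.
  exact (cpr_beta HSP _ n). Qed.
Lemma aS_om : aS ∘ prodM bp (idm Sg) ir = ir ∘ oc.
Proof. rewrite /aS bcp_2. reflexivity. Qed.

Lemma tau_jn0 : tau ∘ (il ∘ jn 0) = ir ∘ p1.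
Proof. rewrite /tau cp_il' (cpr_beta HP tauf 0). reflexivity. Qed.
Lemma tau_jnS (m : nat) : tau ∘ (il ∘ jn (S m)) = tauf (S m).
Proof. rewrite /tau cp_il' (cpr_beta HP tauf (S m)). reflexivity. Qed.
Lemma tau_om : tau ∘ ir = il ∘ prodM bp (idm Sg) ir ∘ om.
Proof. rewrite /tau cp_ir. reflexivity. Qed.

Lemma pr_p1p2 {A B : C} : pr (@P0.p1 C bp A B) p2 = idm _.
Proof. exact (@pr_eta C bp A B). Qed.

Lemma reassoc_E (m : nat) :
  @P0.pr C bp Sg T _ (p1 ∘ @P0.p2 C bp Y (prodO bp Sg (pw m)))
     (il ∘ jn m ∘ @P0.pr C bp Y (pw m) _ p1 (p2 ∘ @P0.p2 C bp Y (prodO bp Sg (pw m)))) ∘ reassoc m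
  = prodM bp (idm Sg) (il ∘ jn m).
Proof. apply prod_ext.
  - rewrite /reassoc. ssimpl. reflexivity.
  - rewrite /reassoc. ssimpl. rewrite pr_comp. ssimpl. do 2 f_equal. apply prod_ext; ssimpl; reflexivity.
Qed.

Lemma tauf_reassoc (m : nat) : tauf (S m) ∘ reassoc m = il ∘ prodM bp (idm Sg) (il ∘ jn m).
Proof. rewrite -reassoc_E. exact (cA _ _ _). Qed.

Lemma unassoc_E (m : nat) :
  reassoc m ∘ @P0.pr C bp Sg (prodO bp Y (pw m)) _ (p1 ∘ @P0.p2 C bp Y (prodO bp Sg (pw m)))
     (@P0.pr C bp Y (pw m) _ p1 (p2 ∘ @P0.p2 C bp Y (prodO bp Sg (pw m)))) = idm _.
Proof. rewrite /reassoc. apply prod_ext.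
  - ssimpl. reflexivity.
  - ssimpl. rewrite pr_comp. ssimpl. apply prod_ext; ssimpl; reflexivity. Qed.

Lemma tauf_S (m : nat) :
  tauf (S m) = il ∘ prodM bp (idm Sg) (il ∘ jn m) ∘
     @P0.pr C bp Sg (prodO bp Y (pw m)) _ (p1 ∘ @P0.p2 C bp Y (prodO bp Sg (pw m)))
     (@P0.pr C bp Y (pw m) _ p1 (p2 ∘ @P0.p2 C bp Y (prodO bp Sg (pw m)))).
Proof. rewrite /tauf [X in _ = X]cA. f_equal. apply prod_ext; ssimpl; reflexivity. Qed.

Lemma nu_tau : nu ∘ tau = idm T.
Proof. apply coprod_ext.
  - apply (cpr_ext HP). intros [|m]; rewrite !cA comp_idl.
    + have E0 : pr (idm Y) (t_bang t Y) ∘ p1 = idm (prodO bp Y (pw 0)).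
      { apply prod_ext. ssimpl. reflexivity. ssimpl. apply term_eq. }
      rewrite tau_jn0 /nu cp_ir' !cA E0 comp_idr. reflexivity.
    + rewrite tau_jnS tauf_S /nu !cA cp_il' comp_assoc aS_jn !cA unassoc_E comp_idr. reflexivity.
  - rewrite !cA comp_idl tau_om !cA /nu cp_il' comp_assoc aS_om cA ocons_split comp_idr. reflexivity.
Qed.


Lemma pb_inj' {A S : C} (m : Hom A S) : is_coproduct_injection m -> forall Z (f : Hom Z S),
  exists P (p : Hom P A) (q : Hom P Z), is_pullback m f p q /\ is_coproduct_injection q.
Proof. intros [B [n Hb]]. exact (@pb_inj C HU _ _ _ m n Hb). Qed.

Record PB {A S Z : C} (m : Hom A S) (f : Hom Z S) := { pbo : C; pbp : Hom pbo A; pbq : Hom pbo Z;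
   pb_sq : is_pullback m f pbp pbq; pb_in : is_coproduct_injection pbq }.

Definition mkPB {A S : C} (m : Hom A S) (Hm : is_coproduct_injection m) {Z : C} (f : Hom Z S) : PB m f :=
  let s1 := constructive_indefinite_description _ (pb_inj' m Hm Z f) in
  let s2 := constructive_indefinite_description _ (proj2_sig s1) in
  let s3 := constructive_indefinite_description _ (proj2_sig s2) in
  Build_PB _ _ _ m f (proj1_sig s1) (proj1_sig s2) (proj1_sig s3) (proj1 (proj2_sig s3)) (proj2 (proj2_sig s3)).

Lemma ilm {A B : C} : monic (@P0.il C bc A B).
Proof. exact (@bin_monic1 C HD _ _ _ _ _ (bc_bin bc)). Qed.
Lemma irm {A B : C} : monic (@P0.ir C bc A B).
Proof. exact (@bin_monic2 C HD _ _ _ _ _ (bc_bin bc)). Qed.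
Lemma disj_lr {A B W : C} (a : Hom W A) (b : Hom W B) : il ∘ a = ir ∘ b -> is_initial W.
Proof. exact (@disj_bin C bp HCC HU HD Hcomm _ _ _ _ _ (bc_bin bc) W a b). Qed.
Lemma sinit {Z Q : C} (f : Hom Z Q) : is_initial Q -> is_initial Z.
Proof. exact (@strict_init C bp HCC Hcomm Z Q f). Qed.

Section Coal.
Variables (X : C) (c : Hom X (coprodO bc (prodO bp Sg X) Y)).
Local Notation FX := (coprodO bc (prodO bp Sg X) Y).

Record Piece := { po : C; pin : Hom po X; pok : is_coproduct_injection pin }.

Lemma ir_inj : is_coproduct_injection (@P0.ir C bc (prodO bp Sg X) Y).
Proof. exists (prodO bp Sg X), il. exact (bin_swap (bc_bin bc)). Qed.
Lemma step_inj (pc : Piece) : is_coproduct_injection (@P0.il C bc (prodO bp Sg X) Y ∘ prodM bp (idm Sg) (pin pc)).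
Proof. destruct (pok pc) as [B [n Hb]].
  exact (@comp_inj C bc _ _ _ _ _ _ _ (@P0.il C bc (prodO bp Sg X) Y) ir (@prod_bin C bp Hcomm Sg _ _ _ _ _ Hb) (bc_bin bc)). Qed.

Definition pb0 := mkPB ir ir_inj c.
Definition pbS (pc : Piece) := mkPB _ (step_inj pc) c.
Fixpoint piece (n : nat) : Piece :=
  match n with
  | O => Build_Piece (pbo _ _ pb0) (pbq _ _ pb0) (pb_in _ _ pb0)
  | S m => let r := pbS (piece m) in Build_Piece (pbo _ _ r) (pbq _ _ r) (pb_in _ _ r)
  end.
Definition Xn (n : nat) : C := po (piece n).
Definition io (n : nat) : Hom (Xn n) X := pin (piece n).
Definition y0 : Hom (Xn 0) Y := pbp _ _ pb0.
Definition kk (n : nat) : Hom (Xn (S n)) (prodO bp Sg (Xn n)) := pbp _ _ (pbS (piece n)).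

Lemma sq0 : c ∘ io 0 = ir ∘ y0.
Proof. symmetry. exact (proj1 (pb_sq _ _ pb0)). Qed.
Lemma sqS (n : nat) : c ∘ io (S n) = il ∘ prodM bp (idm Sg) (io n) ∘ kk n.
Proof. symmetry. exact (proj1 (pb_sq _ _ (pbS (piece n)))). Qed.
Lemma pbk0 {W : C} (p : Hom W X) (y : Hom W Y) : c ∘ p = ir ∘ y -> exists z, io 0 ∘ z = p.
Proof. intros E. destruct (proj2 (pb_sq _ _ pb0) W y p (eq_sym E)) as [z [[_ Hz] _]]. exists z. exact Hz. Qed.
Lemma pbkS (n : nat) {W : C} (p : Hom W X) (q : Hom W (prodO bp Sg (Xn n))) :
  c ∘ p = il ∘ prodM bp (idm Sg) (io n) ∘ q -> exists z, io (S n) ∘ z = p.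
Proof. intros E. destruct (proj2 (pb_sq _ _ (pbS (piece n))) W q p (eq_sym E)) as [z [[_ Hz] _]].
  exists z. exact Hz. Qed.

Lemma disjX : forall i j, i <> j -> forall W (a : Hom W (Xn i)) (b : Hom W (Xn j)), io i ∘ a = io j ∘ b -> is_initial W.
Proof. induction i as [|i IH]; intros [|j] ij W a b E.
  - congruence.
  - apply (disj_lr (prodM bp (idm Sg) (io j) ∘ kk j ∘ b) (y0 ∘ a)).
    rewrite -cA -cA -sqS cA -E comp_assoc sq0 cA. reflexivity.
  - apply (disj_lr (prodM bp (idm Sg) (io i) ∘ kk i ∘ a) (y0 ∘ b)).
    rewrite -cA -cA -sqS cA E comp_assoc sq0 cA. reflexivity.
  - assert (E2 : prodM bp (idm Sg) (io i) ∘ (kk i ∘ a) = prodM bp (idm Sg) (io j) ∘ (kk j ∘ b)).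
    { apply (@ilm (prodO bp Sg X) Y). rewrite !comp_assoc -sqS -sqS !cA E. reflexivity. }
    apply (IH j ltac:(congruence) W (p2 ∘ (kk i ∘ a)) (p2 ∘ (kk j ∘ b))).
    rewrite -(p2_prodM' (idm Sg) (io i)) -(p2_prodM' (idm Sg) (io j)) E2. reflexivity.
Qed.


Definition Mc := constructive_indefinite_description _ (HCC nat countable_nat Xn).
Definition M : C := proj1_sig Mc.
Definition injc := constructive_indefinite_description _ (proj2_sig Mc).
Definition inj : forall n, Hom (Xn n) M := proj1_sig injc.
Definition HM : is_coproduct inj := proj2_sig injc.
Definition m : Hom M X := cpr HM io.
Lemma m_inj (n : nat) : m ∘ inj n = io n.
Proof. exact (cpr_beta HM io n). Qed.

Lemma m_copinj : is_coproduct_injection m.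
Proof.
  assert (Hd : forall i j, i <> j -> forall (Q : C) (p : Hom Q (Xn i)) (q : Hom Q (Xn j)),
     is_pullback (io i) (io j) p q -> is_initial Q).
  { intros i j ij Q p q Hpb. exact (disjX i j ij Q p q (proj1 Hpb)). }
  exact (HCo nat countable_nat Xn X io (fun n => pok (piece n)) Hd M inj HM m m_inj). Qed.

Definition Xic := constructive_indefinite_description _ m_copinj.
Definition Xi : C := proj1_sig Xic.
Definition iic := constructive_indefinite_description _ (proj2_sig Xic).
Definition ii : Hom Xi X := proj1_sig iic.
Definition Hbin : is_bincoproduct m ii := proj2_sig iic.

Lemma m_ii {W : C} (a : Hom W M) (b : Hom W Xi) : m ∘ a = ii ∘ b -> is_initial W.
Proof. exact (@disj_bin C bp HCC HU HD Hcomm _ _ _ _ _ Hbin W a b). Qed.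

Lemma d_ex : exists d : Hom Xi (prodO bp Sg Xi), c ∘ ii = il ∘ prodM bp (idm Sg) ii ∘ d.
Proof.
  destruct (@decomp_bin C HU _ _ _ ir il (bin_swap (bc_bin bc)) Xi (c ∘ ii)) as [h2 Eh2].
  { intros W p q E. rewrite cA in E. destruct (pbk0 _ _ E) as [z Hz].
    apply (m_ii (inj 0 ∘ z) p). rewrite comp_assoc m_inj Hz. reflexivity. }
  destruct (@decomp_bin C HU _ _ _ _ _ (@prod_bin C bp Hcomm Sg _ _ _ _ _ Hbin) Xi h2) as [d Ed].
  { intros W p q E.
    apply (@decomp_all_initial C HU nat countable_nat _ _ _ (Hcomm nat countable_nat _ _ inj HM Sg) W q).
    intros i W' p' q' E'.
    assert (E3 : c ∘ (ii ∘ (p ∘ p')) = il ∘ prodM bp (idm Sg) (io i) ∘ q').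
    { rewrite comp_assoc Eh2 !cA -(cA p' p h2) E cA E' -(m_inj i) prodM_idc cA. reflexivity. }
    destruct (pbkS i _ _ E3) as [z Hz].
    apply (m_ii (inj (S i) ∘ z) (p ∘ p')). rewrite comp_assoc m_inj Hz. reflexivity. }
  exists d. rewrite Eh2 Ed cA. reflexivity. Qed.

Definition d : Hom Xi (prodO bp Sg Xi) := proj1_sig (constructive_indefinite_description _ d_ex).
Lemma c_ii : c ∘ ii = il ∘ prodM bp (idm Sg) ii ∘ d.
Proof. exact (proj2_sig (constructive_indefinite_description _ d_ex)). Qed.

Fixpoint en (n : nat) : Hom (Xn n) (prodO bp Y (pw n)) :=
  match n return Hom (Xn n) (prodO bp Y (pw n)) with
  | O => pr y0 (t_bang t _)
  | S k => reassoc k ∘ prodM bp (idm Sg) (en k) ∘ kk k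
  end.
Definition un (n : nat) : Hom (Xn n) T := il ∘ jn n ∘ en n.

Fixpoint xinf (k : nat) : Hom Xi (pw k) :=
  match k return Hom Xi (pw k) with
  | O => t_bang t _
  | S k' => prodM bp (idm Sg) (xinf k') ∘ d
  end.
Lemma xinf_ok : forall n, powproj bp t Sg n ∘ xinf (S n) = xinf n.
Proof. induction n. apply term_eq.
  change (prodM bp (idm Sg) (powproj bp t Sg n) ∘ (prodM bp (idm Sg) (xinf (S n)) ∘ d) = prodM bp (idm Sg) (xinf n) ∘ d).
  rewrite comp_assoc prodM_comp comp_idl IHn. reflexivity. Qed.

Definition linf : Hom Xi Somega := lim C bp t Sg Somega pi Homega xinf xinf_ok.
Definition u : Hom X T := bcp Hbin (cpr HM un) (ir ∘ linf).

Lemma u_io (n : nat) : u ∘ io n = un n.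
Proof. rewrite -m_inj comp_assoc /u bcp_1. exact (cpr_beta HM un n). Qed.
Lemma u_ii : u ∘ ii = ir ∘ linf.
Proof. rewrite /u bcp_2. reflexivity. Qed.


Local Notation F1u f := (@F1 C bp bc Sg Y _ _ f).

Lemma F1u_ir' {A B W : C} (f : Hom A B) (h : Hom W Y) : F1u f ∘ (ir ∘ h) = ir ∘ h.
Proof. rewrite comp_assoc F1_ir. reflexivity. Qed.

Lemma coal_io (n : nat) : tau ∘ un n = F1u u ∘ (c ∘ io n).
Proof. destruct n as [|k].
  - rewrite /un comp_assoc tau_jn0 sq0 F1u_ir' /= cA p1_pr. reflexivity.
  - rewrite /un comp_assoc tau_jnS /= !comp_assoc tauf_reassoc [X in _ = X]cA sqS.
    rewrite (comp_assoc (kk k) _ (F1u u)) (comp_assoc _ il (F1u u)) F1_il.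
    rewrite !cA !prodM_comp' !comp_idl u_io /un !cA. reflexivity. Qed.

Lemma coal_ii : tau ∘ (ir ∘ linf) = F1u u ∘ (c ∘ ii).
Proof.
  have E : om ∘ linf = prodM bp (idm Sg) linf ∘ d.
  { exact (osplit_lim C bp t Sg Somega pi Homega d xinf xinf_ok eq_refl (fun k => eq_refl)). }
  rewrite comp_assoc tau_om !cA E c_ii.
  rewrite (comp_assoc d _ (F1u u)) (comp_assoc _ il (F1u u)) F1_il.
  rewrite !cA !prodM_comp' !comp_idl u_ii. reflexivity. Qed.

Lemma u_coal : tau ∘ u = F1u u ∘ c.
Proof. apply (bin_ext Hbin).
  - apply (cpr_ext HM). intro n. rewrite !cA m_inj u_io coal_io. reflexivity.
  - rewrite !cA u_ii coal_ii. reflexivity. Qed.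

Definition unassoc (k : nat) := @P0.pr C bp Sg (prodO bp Y (pw k)) _ (p1 ∘ @P0.p2 C bp Y (prodO bp Sg (pw k)))
     (@P0.pr C bp Y (pw k) _ p1 (p2 ∘ @P0.p2 C bp Y (prodO bp Sg (pw k)))).
Lemma tauf_S' (k : nat) : tauf (S k) = il ∘ prodM bp (idm Sg) (il ∘ jn k) ∘ unassoc k.
Proof. exact (tauf_S k). Qed.

Lemma un_S (k : nat) : un (S k) = aS ∘ (prodM bp (idm Sg) (un k) ∘ kk k).
Proof. rewrite /un /= prodM_idc !comp_assoc aS_jn. rewrite !cA. reflexivity. Qed.

Lemma prodM_monic {A B : C} (f : Hom A B) : monic f -> monic (prodM bp (idm Sg) f).
Proof. intros Hf Z a b E. apply prod_ext.
  - rewrite -(comp_idl (p1 ∘ a)) -(comp_idl (p1 ∘ b)) -(p1_prodM' (idm Sg) f a) -(p1_prodM' (idm Sg) f b) E. reflexivity.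
  - apply Hf. rewrite -(p2_prodM' (idm Sg) f a) -(p2_prodM' (idm Sg) f b) E. reflexivity. Qed.

Section Uniq.
Variable v : Hom X T.
Hypothesis Hv : tau ∘ v = F1u v ∘ c.

Lemma v_io : forall n, v ∘ io n = un n.
Proof. intro n.
  transitivity (nu ∘ (tau ∘ (v ∘ io n))). { rewrite comp_assoc nu_tau comp_idl. reflexivity. }
  rewrite (comp_assoc (io n) v tau) Hv cA. induction n as [|k IH].
  - rewrite sq0 F1u_ir' /nu cp_ir' !cA /un /= cA.
    have E : pr (idm Y) (t_bang t Y) ∘ y0 = pr y0 (t_bang t (Xn 0)).
    { apply prod_ext; ssimpl. reflexivity. apply term_eq. }
    rewrite E. reflexivity.
  - rewrite sqS (comp_assoc (kk k) _ (F1u v)) (comp_assoc _ il (F1u v)) F1_il !cA /nu cp_il'.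
    rewrite prodM_comp' comp_idl.
    have IH' : v ∘ io k = un k.
    { rewrite -IH. transitivity (nu ∘ (tau ∘ (v ∘ io k))). rewrite comp_assoc nu_tau comp_idl. reflexivity.
      rewrite (comp_assoc (io k) v tau) Hv cA. reflexivity. }
    rewrite IH' un_S. reflexivity. Qed.

Lemma g_eq : tau ∘ (v ∘ ii) = il ∘ (prodM bp (idm Sg) (v ∘ ii) ∘ d).
Proof. rewrite comp_assoc Hv cA c_ii.
  rewrite (comp_assoc d _ (F1u v)) (comp_assoc _ il (F1u v)) F1_il.
  rewrite !cA prodM_comp' comp_idl. reflexivity. Qed.

Lemma Gn : forall n (W : C) (p : Hom W Xi) (q : Hom W (prodO bp Y (pw n))), (v ∘ ii) ∘ p = il ∘ jn n ∘ q -> is_initial W.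
Proof. induction n as [|n IH]; intros W p q E.
  - apply (disj_lr (prodM bp (idm Sg) (v ∘ ii) ∘ (d ∘ p)) (p1 ∘ q)).
    transitivity (tau ∘ ((v ∘ ii) ∘ p)). { rewrite (comp_assoc p (v ∘ ii) tau) g_eq !cA. reflexivity. }
    rewrite E comp_assoc tau_jn0 cA. reflexivity.
  - have E2 : @P0.il C bc (prodO bp Sg T) Y ∘ (prodM bp (idm Sg) (v ∘ ii) ∘ (d ∘ p)) = il ∘ (prodM bp (idm Sg) (il ∘ jn n) ∘ (unassoc n ∘ q)).
    { transitivity (tau ∘ ((v ∘ ii) ∘ p)). { rewrite (comp_assoc p (v ∘ ii) tau) g_eq !cA. reflexivity. }
      rewrite E comp_assoc tau_jnS tauf_S' !cA. reflexivity. }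
    have E3 := @ilm (prodO bp Sg T) Y _ _ _ E2.
    apply (IH W (p2 ∘ (d ∘ p)) (p2 ∘ (unassoc n ∘ q))).
    rewrite -(p2_prodM' (idm Sg) (v ∘ ii)) E3 p2_prodM'. reflexivity. Qed.

Lemma g_fact : exists g', v ∘ ii = ir ∘ g'.
Proof. apply (@decomp_bin C HU _ _ _ il ir (bc_bin bc) Xi (v ∘ ii)). intros W p q E.
  apply (@decomp_all_initial C HU nat countable_nat _ _ _ HP W q). intros i W' p' q' E'.
  apply (Gn i W' (p ∘ p') q'). rewrite comp_assoc E cA E'. rewrite !cA. reflexivity. Qed.

Lemma v_ii : v ∘ ii = ir ∘ linf.
Proof. destruct g_fact as [g' Eg].
  have E1 : om ∘ g' = prodM bp (idm Sg) g' ∘ d.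
  { apply (prodM_monic _ (@irm P Somega)). apply (@ilm (prodO bp Sg T) Y).
    have H1 := g_eq. rewrite Eg (comp_assoc g' ir tau) tau_om in H1.
    rewrite prodM_comp' comp_idl -H1 !cA. reflexivity. }
  have Hk := osplit_char C bp t Sg Somega pi Homega g' d xinf eq_refl (fun k => eq_refl) E1.
  rewrite Eg. f_equal. apply (lim_ext C bp t Sg Somega pi Homega). intro k.
  rewrite Hk /linf lim_beta. reflexivity. Qed.

Lemma v_eq : v = u.
Proof. apply (bin_ext Hbin).
  - apply (cpr_ext HM). intro n. rewrite !cA m_inj v_io u_io. reflexivity.
  - rewrite v_ii u_ii. reflexivity. Qed.
End Uniq.

Lemma final_at : exists! u : Hom X T, tau ∘ u = F1u u ∘ c.
Proof. exists u. split. exact u_coal. intros v Hv. symmetry. exact (v_eq v Hv). Qed.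

End Coal.

Lemma tau_final : @is_final C bp bc Sg Y T tau.
Proof. intros X c. exact (final_at X c). Qed.
End Core.

End P5.

Import P0 P1 P2 P3 P4 P5.
Import ssreflect.
Unset Implicit Arguments.

Lemma swap_iso {C : Category} (bp : forall X Y : C, BinProduct X Y) (bc : forall X Y : C, BinCoproduct X Y)
  (A B D : C) : is_iso_obj (coprodO bc (prodO bp A B) D) (coprodO bc (prodO bp B A) D).
Proof.
  have S1 : forall U V : C, @P0.pr C bp V U _ (P0.p2 bp) (P0.p1 bp) ∘ @P0.pr C bp U V _ (P0.p2 bp) (P0.p1 bp) = idm _.
  { intros U V. apply prod_ext; ssimpl; reflexivity. }
  exists (coprodM bc (@P0.pr C bp B A _ (P0.p2 bp) (P0.p1 bp)) (idm D)),
         (coprodM bc (@P0.pr C bp A B _ (P0.p2 bp) (P0.p1 bp)) (idm D)).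
  split; rewrite coprodM_comp S1 comp_idl coprodM_id; reflexivity. Qed.

Theorem mainTheorem13
  (C : Category) (HE : hyper_extensive C)
  (t : Terminal C) (bp : forall X Y : C, BinProduct X Y)
  (bc : forall X Y : C, BinCoproduct X Y)
  (HL : has_chain_limits C)
  (Hcomm : products_commute_with_coproducts bp)
  (Sg : C)
  (Sstar : C) (ins : forall n, Hom (pow bp t Sg n) Sstar)
  (Hstar : is_coproduct ins)
  (Somega : C) (pi : forall n, Hom Somega (pow bp t Sg n))
  (Homega : is_chain_limit (powproj bp t Sg) pi) :
  (forall Y : C,
     exists (T : C) (a : Hom (H0 bp Sg T) T) (eta : Hom Y T),
       is_free_cia bc (H1 bp Sg) a eta /\
       is_iso_obj T (coprodO bc (prodO bp Sstar Y) Somega)) /\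
  (forall W Y : C,
     exists (T : C) (a : Hom (H'0 bp bc Sg W T) T) (eta : Hom Y T),
       is_free_cia bc (H'1 bp bc Sg W) a eta /\
       is_iso_obj T (coprodO bc (prodO bp Sstar (coprodO bc W Y)) Somega)).
Proof.
  destruct HE as [HCC [HU [HD HCo]]].
  have Core : forall Y : C,
     exists (T : C) (a : Hom (H0 bp Sg T) T) (eta : Hom Y T),
       is_free_cia bc (H1 bp Sg) a eta /\
       is_iso_obj T (coprodO bc (prodO bp Sstar Y) Somega).
  { intro Y.
    have Hf := tau_final C bp bc t HCC HU HD HCo Hcomm Sg Sstar ins Hstar Somega pi Homega Y.
    destruct (lambek Hf) as [l [L1 L2]].
    exists (coprodO bc (prodO bp Y Sstar) Somega), (alg l), (eta l). split.
    - exact (final_free Hf L1 L2).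
    - exact (swap_iso bp bc Y Sstar Somega). }
  split. exact Core.
  intros W Y. destruct (Core (coprodO bc W Y)) as [T [a [e [Hfree Hiso]]]].
  exists T, (cp bc (e ∘ il bc) a), (e ∘ ir bc). split.
  - exact (H'_free Hfree).
  - exact Hiso.
Qed.
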